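(* Let $A$ be an associative algebra (with identity) over a field $\mathbf{k}$, let $q\in A$ be an idempotent, let $(A,q):=\{x\in A\mid qxq=qx\}$, and fix $k\in\mathbf{k}$. Then $(A,q)$ is a Lie algebra under the bracket $$[x,y]_{6,k}:=xy-yx-xyq+yxq+kxqy-kyqx,\qquad x,y\in(A,q).$$
   Context: $(A,q)$ is the (right) invariant algebra induced by the idempotent $q$; it is a subalgebra of $A$. The resulting Lie algebra is denoted $Lie((A,q),[\,,\,]_{6,k})$. *)

(* Defs.v *)
From HB Require Import structures.
From mathcomp Require Import all_boot all_order all_algebra.
Set Implicit Arguments. Unset Strict Implicit. Unset Printing Implicit Defensive.
Import GRing.Theory.
Local Open Scope ring_scope.

Definition invariant_alg (K : fieldType) (A : algType K) (q : A) : pred A :=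
  fun x => q * x * q == q * x.

Definition bracket6 (K : fieldType) (A : algType K) (q : A) (k : K) (x y : A) : A :=
  x * y - y * x - x * y * q + y * x * q + k *: (x * q * y) - k *: (y * q * x).

Definition is_lie_algebra_on (K : fieldType) (V : lmodType K) (S : pred V)
    (br : V -> V -> V) : Prop :=
  [/\ 0 \in S /\ (forall (a : K) x y, x \in S -> y \in S -> a *: x + y \in S),
      (forall x y, x \in S -> y \in S -> br x y \in S),
      (forall (a : K) x y z, x \in S -> y \in S -> z \in S ->
          br (a *: x + y) z = a *: br x z + br y z
       /\ br z (a *: x + y) = a *: br z x + br z y),
      (forall x, x \in S -> br x x = 0) &
      (forall x y z, x \in S -> y \in S -> z \in S ->
          br x (br y z) + br y (br z x) + br z (br x y) = 0)].

(* Main.v *)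
Require Import Defs.
From mathcomp Require Import all_boot all_order all_algebra.
Local Open Scope ring_scope.
Import GRing.Theory.

Lemma h1 (V : zmodType) (a b c d e f : V) :
  a - b - c + d + e - f = (a - c + e) - (b - d + f).
Proof.
rewrite !opprD !opprK !addrA; congr (_ - f).
rewrite -!addrA; congr (a + _); rewrite addrC !addrA.
by rewrite [- c + d + e]addrAC [LHS]addrAC.
Qed.
Lemma h2 (V : zmodType) (a b c d e f : V) :
  (a + b) - (c + d) + (e + f) = (a - c + e) + (b - d + f).
Proof. by rewrite opprD [a + b + (- c - d)]addrACA [_ + (e + f)]addrACA. Qed.
Lemma h3 (V : zmodType) (a b c d e f : V) :
  (a - b - (c - d)) + (c - e - (f - b)) + (f - d - (a - e)) = 0.
Proof.
rewrite !opprB !addrA addrNK addrNK.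
rewrite [a - b + d - e + b]addrAC [a - b + d + b]addrAC addrNK.
by rewrite [a + d - e - d]addrAC addrK addrNK subrr.
Qed.

Section S.
Variables (K : fieldType) (A : algType K) (q : A) (k : K).
Hypothesis qq : q * q = q.

Definition r : A := locked (1 - q).
Lemma rE : r = 1 - q. Proof. by rewrite /r -lock. Qed.
Definition g (y : A) : A := y * r + k *: (q * y).

Lemma rr : r * r = r.
Proof. by rewrite rE mulrBr mulr1 mulrBl mul1r qq subrr subr0. Qed.
Lemma rq : r * q = 0.
Proof. by rewrite rE mulrBl mul1r qq subrr. Qed.
Lemma qzr z : q * z * q = q * z -> q * z * r = 0.
Proof. by move=> h; rewrite rE mulrBr mulr1 h subrr. Qed.

Lemma gD a x y : g (a *: x + y) = a *: g x + g y.
Proof.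
rewrite /g (mulrDl (a *: x) y r) (mulrDr q (a *: x) y) scalerDr -scalerAl -scalerAr !scalerDr !scalerA mulrC.
by rewrite addrACA.
Qed.
Lemma gB x y : g (x - y) = g x - g y.
Proof.
have g0 : g 0 = 0 by rewrite /g mul0r mulr0 scaler0 addr0.
have -> : x - y = 1 *: x + ((-1) *: y + 0) by rewrite scale1r scaleN1r addr0.
by rewrite gD gD g0 addr0 scale1r scaleN1r.
Qed.

Lemma bE x y : bracket6 q k x y = x * g y - y * g x.
Proof.
rewrite /bracket6 /g rE !mulrDr !mulr1 !mulrN -!scalerAr !mulrA.
by rewrite h1.
Qed.

Lemma gM y z : q * y * q = q * y -> q * z * q = q * z -> g (y * g z) = g y * g z.
Proof.
move=> hy hz.
have e1 : forall u, u * r * q = 0 by move=> u; rewrite -mulrA rq mulr0.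
have e2 : forall u, u * q * z * r = 0 by move=> u; rewrite -(mulrA u) -(mulrA u) qzr // mulr0.
have e3 : forall u, u * r * z * r = u * z * r.
  move=> u; rewrite -!mulrA; congr (u * _).
  by rewrite {1}rE mulrBl mul1r mulrA qzr // subr0.
have e4 : forall u, u * r * r = u * r by move=> u; rewrite -mulrA rr.
rewrite /g !mulrDr !mulrDl -!scalerAl -!scalerAr !scalerA !mulrA.
rewrite ?e1 ?e2 ?e3 ?e4 ?mul0r ?scaler0.
by rewrite -!scalerAl e2 scaler0 addr0 add0r scalerDr scalerA addrA.
Qed.

Definition P (x y : A) := x * g y.

Lemma jac x y z : q * x * q = q * x -> q * y * q = q * y -> q * z * q = q * z ->
  P x (P y z - P z y) - P (P y z - P z y) x
  + (P y (P z x - P x z) - P (P z x - P x z) y)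
  + (P z (P x y - P y x) - P (P x y - P y x) z) = 0.
Proof.
move=> hx hy hz.
rewrite /P !gB !mulrBr !mulrBl !gM // !mulrA.
exact: h3.
Qed.


Lemma inS x : (x \in invariant_alg q) = (q * x * q == q * x).
Proof. by []. Qed.

Lemma SD a x y : q * x * q = q * x -> q * y * q = q * y ->
  q * (a *: x + y) * q = q * (a *: x + y).
Proof. by move=> hx hy; rewrite mulrDr mulrDl -!scalerAr -scalerAl hx hy. Qed.

Lemma SB x y : q * x * q = q * x -> q * y * q = q * y -> q * (x - y) * q = q * (x - y).
Proof. by move=> hx hy; rewrite addrC -scaleN1r SD. Qed.

Lemma Sq : q * q * q = q * q.
Proof. by rewrite qq qq. Qed.

Lemma SM x y : q * x * q = q * x -> q * y * q = q * y -> q * (x * y) * q = q * (x * y).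
Proof.
move=> hx hy; rewrite !mulrA -hx -(mulrA (q*x*q)) -(mulrA (q*x)) [q*(y*q)]mulrA hy.
by rewrite mulrA hx.
Qed.

Lemma Sg y : q * y * q = q * y -> q * g y * q = q * g y.
Proof.
move=> hy; rewrite /g addrC rE mulrBr mulr1; apply: SD; first exact: SM Sq hy.
by apply: SB => //; apply: SM hy Sq.
Qed.

Lemma hD (V : zmodType) (a b c d : V) : (a + b) - (c + d) = (a - c) + (b - d).
Proof. by rewrite opprD addrACA. Qed.
End S.

Theorem proposition1p2 (K : fieldType) (A : algType K) (q : A) (k : K) :
  q * q = q ->
  is_lie_algebra_on (invariant_alg q) (bracket6 q k).
Proof.
move=> qq.
have S0 : (0 : A) \in invariant_alg q by rewrite inS mulr0 mul0r.
split.
- split => // a x y; rewrite !inS => /eqP hx /eqP hy; apply/eqP; exact: SD.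
- move=> x y; rewrite !inS bE => /eqP hx /eqP hy; apply/eqP.
  by apply: SB; apply: SM => //; apply: Sg.
- move=> a x y z _ _ _; rewrite !bE gD (mulrDl (a *: x) y) (mulrDr z) -scalerAl -scalerAr.
  by split; rewrite hD scalerBr.
- by move=> x _; rewrite bE subrr.
- move=> x y z; rewrite !inS => /eqP hx /eqP hy /eqP hz; rewrite !bE.
  exact: jac.
Qed.
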